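(* Let $G$ be an M-graph and let $D$ be an effective real divisor on $G$. Then $D$ is linearly equivalent to a totally real effective divisor on $G$.
   Context: A finite graph $G$ has vertex set $V(G)$, edge set $E(G)$ and incidence function $\psi$ assigning to each edge a set of one or two vertices (loops and multiple edges allowed); $G$ is assumed connected, with genus $g(G)=|E(G)|-|V(G)|+1$ (for a possibly disconnected graph $H$, $g(H)=c(H)+|E(H)|-|V(H)|$ with $c(H)$ its number of components). A real structure is a pair of involutions of $V(G)$, $E(G)$, written $v\mapsto\overline v$, $e\mapsto\overline e$, with $\psi(\overline e)=\overline{\psi(e)}$. Real vertices/edges are the fixed ones; $V_{\mathbb R}(G)$ is the set of real vertices; a real edge is isolated if not all of its ends are real, non-isolated otherwise. $G(\mathbb R)$ is the subgraph with vertices $V_{\mathbb R}(G)$ and edges the non-isolated real edges. $s(G)=e^i(G)+\sum_i(g(G(\mathbb R)_i)+1)$, the sum over the connected components $G(\mathbb R)_i$ of $G(\mathbb R)$ and $e^i(G)$ the number of isolated real edges. $G$ is an M-graph if it has no isolated real edge and $s(G)=g(G)+1$. Divisors are formal $\mathbb Z$-combinations of vertices; $\overline D(v)=D(\overline v)$; $D$ is real if $\overline D=D$, and totally real if moreover its support is contained in $V_{\mathbb R}(G)$. For $f:V(G)\to\mathbb Z$, $\Delta(f)(v)=\sum_{e,\,\psi(e)=\{v,w\}}(f(w)-f(v))$; $D_1\sim D_2$ iff $D_2-D_1=\Delta(f)$ for some $f$. *)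

(* Defs.v *)
From HB Require Import structures.
From mathcomp Require Import all_boot all_order all_algebra.
Set Implicit Arguments. Unset Strict Implicit. Unset Printing Implicit Defensive.
Import Order.TTheory GRing.Theory Num.Theory.
Local Open Scope ring_scope.

(* A finite graph with loops and multiple edges: vertex set V, edge set E,
   incidence function psi assigning to each edge a set of one or two vertices. *)
Record graph := Graph {
  gV : finType;
  gE : finType;
  psi : gE -> {set gV};
  psi_card : forall e, (0 < #|psi e| <= 2)%N
}.

Section GraphDefs.
Variable G : graph.
Notation V := (gV G).
Notation E := (gE G).

Definition adj : rel V := fun x y => [exists e, (x \in psi e) && (y \in psi e)].
Definition connected_graph : Prop := forall x y : V, connect adj x y.

Definition genus : int := (#|E|%:Z - #|V|%:Z + 1)%R.

Record real_structure := RealStructure {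
  conjV : V -> V;
  conjE : E -> E;
  conjV_inv : involutive conjV;
  conjE_inv : involutive conjE;
  conj_psi : forall e, psi (conjE e) = conjV @: psi e
}.

Variable rs : real_structure.

Definition VR : {set V} := [set v | conjV rs v == v].
Definition ER : {set E} := [set e | conjE rs e == e].
Definition isolated (e : E) : bool := (e \in ER) && ~~ (psi e \subset VR).
Definition nonisolated_real (e : E) : bool := (e \in ER) && (psi e \subset VR).

(* G(R): vertices VR, edges the non-isolated real edges *)
Definition adjR : rel V :=
  fun x y => [exists e, [&& nonisolated_real e, x \in psi e & y \in psi e]].

Definition GR_components : {set {set V}} :=
  [set [set y | connect adjR x y] | x in VR].

Definition comp_genus (C : {set V}) : int :=
  (#|[set e | nonisolated_real e & psi e \subset C]|%:Z - #|C|%:Z + 1)%R.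

Definition e_iso : nat := #|[set e | isolated e]|.

Definition s_inv : int := (e_iso%:Z + \sum_(C in GR_components) (comp_genus C + 1))%R.

Definition M_graph : Prop :=
  connected_graph /\ e_iso = 0%N /\ s_inv = (genus + 1)%R.

Definition divisor := {ffun V -> int}.
Definition effective (D : divisor) : Prop := forall v, 0 <= D v.
Definition real_div (D : divisor) : Prop := forall v, D (conjV rs v) = D v.
Definition totally_real (D : divisor) : Prop :=
  real_div D /\ forall v, D v != 0 -> v \in VR.

(* Laplacian: Delta(f)(v) = sum over edges e with psi e = {v,w} of f w - f v
   (loops contribute 0). *)
Definition laplacian (f : V -> int) (v : V) : int :=
  \sum_(e | v \in psi e) \sum_(w in psi e :\ v) (f w - f v).

Definition lin_equiv (D1 D2 : divisor) : Prop :=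
  exists f : V -> int, forall v, D2 v - D1 v = laplacian f v.

End GraphDefs.

(* Main.v *)
Require Import Defs.
From mathcomp Require Import all_boot all_order all_algebra.
Set Implicit Arguments. Unset Strict Implicit. Unset Printing Implicit Defensive.
Import Order.TTheory GRing.Theory Num.Theory.

Definition bfs_step (V E : finType) (ps : E -> {set V}) (P : pred E)
  (cls : V -> {set V}) (R : {set V}) : {set V} :=
  R :|: [set v | [exists y in cls v, exists e,
     [&& P e, y \in ps e & [exists z in R, z \in ps e]]]].

Definition bfs (V E : finType) (ps : E -> {set V}) (P : pred E)
  (cls : V -> {set V}) (R0 : {set V}) (n : nat) : {set V} :=
  iter n (bfs_step ps P cls) R0.

Lemma bfs_mono (V E : finType) (ps : E -> {set V}) (P : pred E) (cls : V -> {set V}) (R0 : {set V}) m n :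
  (m <= n)%N -> bfs ps P cls R0 m \subset bfs ps P cls R0 n.
Proof.
elim: n => [|n IH]; first by rewrite leqn0 => /eqP->.
rewrite leq_eqVlt => /orP[/eqP->//|]; rewrite ltnS => /IH H.
apply: subset_trans H _; rewrite /bfs iterS /bfs_step; exact: subsetUl.
Qed.

Lemma bfs_cls (V E : finType) (ps : E -> {set V}) (P : pred E) (cls : V -> {set V}) (R0 : {set V}) n u v :
  (forall u v, u \in cls v -> cls u = cls v) ->
  (forall u v, u \in cls v -> v \in R0 -> u \in R0) ->
  u \in cls v -> v \in bfs ps P cls R0 n -> u \in bfs ps P cls R0 n.
Proof.
move=> Hc H0 Huv; elim: n v Huv => [|n IH] v Huv; first exact: H0.
rewrite /bfs iterS /bfs_step -/(bfs _ _ _ _ n) !inE => /orP[Hv|Hv].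
  by rewrite (IH v Huv Hv).
by rewrite (Hc _ _ Huv) Hv orbT.
Qed.

Lemma bfs_edge (V E : finType) (ps : E -> {set V}) (P : pred E) (cls : V -> {set V}) (R0 : {set V}) n e y z :
  (forall v, v \in cls v) ->
  P e -> y \in ps e -> z \in ps e -> z \in bfs ps P cls R0 n ->
  y \in bfs ps P cls R0 n.+1.
Proof.
move=> Hc Pe Hy Hz HzR; rewrite /bfs iterS /bfs_step -/(bfs _ _ _ _ n) !inE.
apply/orP; right; apply/existsP; exists y; rewrite Hc /=.
apply/existsP; exists e; rewrite Pe Hy /=; apply/existsP; exists z; by rewrite HzR Hz.
Qed.

Lemma bfs_parent (V E : finType) (ps : E -> {set V}) (P : pred E) (cls : V -> {set V}) (R0 : {set V}) n v :
  v \in bfs ps P cls R0 n.+1 -> v \notin bfs ps P cls R0 n ->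
  exists y e z, [/\ y \in cls v, P e, y \in ps e, z \in ps e & z \in bfs ps P cls R0 n].
Proof.
rewrite /bfs iterS /bfs_step -/(bfs _ _ _ _ n) !inE => /orP[->//|H _].
case/existsP: H => y /andP[Hy /existsP[e /and3P[Pe Hye /existsP[z /andP[Hz1 Hz2]]]]].
by exists y, e, z.
Qed.

Lemma bfs_dist (V E : finType) (ps : E -> {set V}) (P : pred E) (cls : V -> {set V}) (R0 : {set V}) :
  (forall v, exists n, v \in bfs ps P cls R0 n) ->
  exists d : V -> nat, (forall v, v \in bfs ps P cls R0 (d v)) /\
     (forall v n, v \in bfs ps P cls R0 n -> (d v <= n)%N).
Proof.
move=> Hall.
exists (fun v => ex_minn (Hall v)); split.
  by move=> v; case: ex_minnP.
by move=> v n Hn; case: ex_minnP => m _ Hm; apply: Hm.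
Qed.

Lemma inj_core (V E I : finType) (ps : E -> {set V}) (A : {set I}) (t : I -> V)
  (eps : I -> E) (d : V -> nat) :
  (forall i, i \in A -> t i \in ps (eps i)) ->
  (forall i, i \in A -> forall u, u \in ps (eps i) -> u != t i -> (d u < d (t i))%N) ->
  forall i j, i \in A -> j \in A -> eps i = eps j -> t i = t j.
Proof.
move=> H1 H2 i j Hi Hj Heq; apply/eqP; apply/negPn/negP => Hne.
have a := H2 i Hi (t j); have b := H2 j Hj (t i).
rewrite Heq (H1 j Hj) in a; rewrite -Heq (H1 i Hi) in b.
have := a isT; rewrite eq_sym Hne => /(_ isT) a'.
have := b isT; rewrite Hne => /(_ isT) b'.
by have := ltn_trans a' b'; rewrite ltnn.
Qed.

Lemma connect_closed (T : finType) (r : rel T) (Q : pred T) x y :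
  (forall a b, r a b -> Q a -> Q b) -> connect r x y -> Q x -> Q y.
Proof.
move=> H /connectP[p Hp ->{y}]; elim: p x Hp => [|a p IH] x //= /andP[Hxa Hp] Qx.
exact: (IH a Hp (H _ _ Hxa Qx)).
Qed.

Lemma psi_le2 (G : graph) (e : gE G) : (#|psi e| <= 2)%N.
Proof. by case/andP: (psi_card e). Qed.

Lemma psi_two (G : graph) (e : gE G) y z u :
  y \in psi e -> z \in psi e -> y != z -> u \in psi e -> (u == y) || (u == z).
Proof.
move=> Hy Hz Hyz Hu; apply/negPn/negP; rewrite negb_or => /andP[Huy Huz].
have Hs : [set y; z; u] \subset psi e.
  by apply/subsetP=> a; rewrite !inE => /orP[/orP[]|]/eqP->.
have := leq_trans (subset_leq_card Hs) (psi_le2 e).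
rewrite -setUA; rewrite cardsU1 cardsU1 cards1 !inE.
by rewrite (negbTE Hyz) (eq_sym y u) (negbTE Huy) (eq_sym z u) Huz.
Qed.


Lemma mem_psi_conj (G : graph) (rs : real_structure G) e v :
  v \in psi e -> conjV rs v \in psi (conjE rs e).
Proof. by move=> H; rewrite conj_psi; apply: imset_f. Qed.

Lemma mem_psi_conj' (G : graph) (rs : real_structure G) e v :
  v \in psi (conjE rs e) -> conjV rs v \in psi e.
Proof. by move=> H; have := mem_psi_conj rs H; rewrite conjE_inv. Qed.

Lemma VR_conj (G : graph) (rs : real_structure G) v :
  (conjV rs v \in VR rs) = (v \in VR rs).
Proof.
rewrite !inE; apply/eqP/eqP => H; last by rewrite H.
exact: (can_inj (conjV_inv rs) H).
Qed.

Lemma ER_conj (G : graph) (rs : real_structure G) e :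
  (conjE rs e \in ER rs) = (e \in ER rs).
Proof.
rewrite !inE; apply/eqP/eqP => H; last by rewrite H.
exact: (can_inj (conjE_inv rs) H).
Qed.

Lemma no_iso (G : graph) (rs : real_structure G) :
  M_graph rs -> forall e, ~~ isolated rs e.
Proof.
case=> _ [H _] e; apply/negP => He.
have : (0 < e_iso rs)%N by apply/card_gt0P; exists e; rewrite inE.
by rewrite H.
Qed.

Lemma ER_VR (G : graph) (rs : real_structure G) e v :
  M_graph rs -> e \in ER rs -> v \in psi e -> v \in VR rs.
Proof.
move=> HM He Hv; have := no_iso HM e; rewrite /isolated He /= negbK.
by move/subsetP/(_ v Hv).
Qed.

Lemma nonreal_edge (G : graph) (rs : real_structure G) e v :
  M_graph rs -> v \notin VR rs -> v \in psi e -> e \notin ER rs.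
Proof. by move=> HM Hv He; apply/negP => H; rewrite (ER_VR HM H He) in Hv. Qed.

Lemma ER_nonisol (G : graph) (rs : real_structure G) e :
  M_graph rs -> (e \in ER rs) = nonisolated_real rs e.
Proof.
move=> HM; rewrite /nonisolated_real; case He: (e \in ER rs) => //=.
by apply/esym/subsetP => v; apply: ER_VR.
Qed.

Lemma adjR_VR (G : graph) (rs : real_structure G) x y :
  adjR rs x y -> (x \in VR rs) && (y \in VR rs).
Proof.
case/existsP=> e /and3P[] H0 Hx Hy.
move: H0; rewrite /nonisolated_real => /andP[_ /subsetP H].
by rewrite !H.
Qed.

Lemma adjR_sym (G : graph) (rs : real_structure G) : symmetric (adjR rs).
Proof.
move=> x y; apply/existsP/existsP => -[e /and3P[a b c]]; exists e; by rewrite a b c.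
Qed.

Lemma connectR_VR (G : graph) (rs : real_structure G) x y :
  connect (adjR rs) x y -> x \in VR rs -> y \in VR rs.
Proof.
move=> H; apply: (connect_closed (Q := fun v => v \in VR rs)) H => a b /adjR_VR/andP[].
by [].
Qed.

Lemma conjE_neq (G : graph) (rs : real_structure G) e :
  e \notin ER rs -> conjE rs e != e.
Proof. by rewrite inE. Qed.

Lemma conjV_neq (G : graph) (rs : real_structure G) v :
  v \notin VR rs -> conjV rs v != v.
Proof. by rewrite inE. Qed.

Definition clsq (G : graph) (rs : real_structure G) (v : gV G) : {set gV G} :=
  if v \in VR rs then [set u | connect (adjR rs) v u] else [set v; conjV rs v].

Lemma connR_sym (G : graph) (rs : real_structure G) : connect_sym (adjR rs).
Proof. exact: sym_connect_sym (@adjR_sym G rs). Qed.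

Lemma clsq_refl (G : graph) (rs : real_structure G) v : v \in clsq rs v.
Proof. rewrite /clsq; case: ifP => _; by rewrite !inE ?connect0 ?eqxx. Qed.

Lemma clsq_conj (G : graph) (rs : real_structure G) v : conjV rs v \in clsq rs v.
Proof.
rewrite /clsq; case: ifP => H; last by rewrite !inE eqxx orbT.
have /eqP-> : conjV rs v == v by move: H; rewrite inE.
by rewrite inE connect0.
Qed.

Lemma clsq_VR (G : graph) (rs : real_structure G) u v :
  u \in clsq rs v -> (u \in VR rs) = (v \in VR rs).
Proof.
rewrite /clsq; case: ifP => Hv.
  by rewrite inE => H; rewrite (connectR_VR H Hv).
by rewrite in_set2 => /orP[]/eqP->; rewrite ?VR_conj.
Qed.

Lemma clsq_eq (G : graph) (rs : real_structure G) u v :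
  u \in clsq rs v -> clsq rs u = clsq rs v.
Proof.
move=> Huv; have Hr := clsq_VR Huv; move: Huv; rewrite /clsq Hr; case: ifP => Hv.
  rewrite inE => H; apply/setP => y; rewrite !inE.
  by rewrite (same_connect (@connR_sym G rs) H).
rewrite !inE => /orP[]/eqP->//; rewrite conjV_inv; apply/setP => y; rewrite !inE orbC.
by [].
Qed.

Lemma clsq_edge (G : graph) (rs : real_structure G) e y z :
  M_graph rs -> e \in ER rs -> y \in psi e -> z \in psi e -> z \in clsq rs y.
Proof.
move=> HM He Hy Hz; rewrite /clsq (ER_VR HM He Hy) inE; apply: connect1.
apply/existsP; exists e; by rewrite -ER_nonisol // He Hy Hz.
Qed.

Lemma comps_mem (G : graph) (rs : real_structure G) C :
  C \in GR_components rs -> exists2 x, x \in VR rs & C = clsq rs x.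
Proof. by case/imsetP => x Hx ->; exists x => //; rewrite /clsq Hx. Qed.

Lemma clsq_comps (G : graph) (rs : real_structure G) x :
  x \in VR rs -> clsq rs x \in GR_components rs.
Proof. by move=> Hx; rewrite /clsq Hx; apply: imset_f. Qed.

Lemma sum_comps_V (G : graph) (rs : real_structure G) :
  (\sum_(C in GR_components rs) #|C| = #|VR rs|)%N.
Proof.
under eq_bigr => C _ do rewrite -sum1_card big_mkcond /=.
rewrite exchange_big /= -sum1_card [in RHS]big_mkcond /=.
apply: eq_bigr => v _; case: ifP => Hv.
  rewrite (bigD1 (clsq rs v)) ?clsq_comps //= clsq_refl big1 //.
  move=> C /andP[/comps_mem[x Hx ->] Hne]; case: ifP => // Hvx.
  by rewrite -(clsq_eq Hvx) eqxx in Hne.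
apply: big1 => C /comps_mem[x Hx ->]; case: ifP => // Hvx.
by rewrite (clsq_VR Hvx) Hx in Hv.
Qed.

Lemma sum_comps_E (G : graph) (rs : real_structure G) :
  M_graph rs ->
  (\sum_(C in GR_components rs) #|[set e | nonisolated_real rs e & psi e \subset C]|
   = #|[set e | nonisolated_real rs e]|)%N.
Proof.
move=> HM.
under eq_bigr => C _ do rewrite -sum1_card big_mkcond /=.
rewrite exchange_big /= -sum1_card [in RHS]big_mkcond /=.
apply: eq_bigr => e _; rewrite !inE; case: ifP => He /=; last first.
  by apply: big1 => C _; rewrite inE He.
have [y Hy] : exists y, y \in psi e.
  by apply/card_gt0P; case/andP: (psi_card e).
have HeR : e \in ER rs by rewrite ER_nonisol.
have Hsub : psi e \subset clsq rs y.
  by apply/subsetP => z Hz; apply: clsq_edge HM HeR Hy Hz.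
rewrite (bigD1 (clsq rs y)) ?clsq_comps ?(ER_VR HM HeR Hy) //= inE He Hsub big1 //.
move=> C /andP[/comps_mem[x Hx ->] Hne]; rewrite inE He /=; case: ifP => // Hs.
by rewrite -(clsq_eq (subsetP Hs y Hy)) eqxx in Hne.
Qed.

From mathcomp Require Import zify.

Local Open Scope ring_scope.

Lemma Posz_sum (I : finType) (A : {pred I}) (F : I -> nat) :
  Posz (\sum_(i in A) F i)%N = \sum_(i in A) Posz (F i).
Proof. by rewrite (big_morph Posz PoszD (erefl _)). Qed.

Lemma M_arith (eh k vr ce cv E V : nat) :
  (eh + ce = E)%N -> (vr + cv = V)%N ->
  Posz (eh + k * 2)%N - Posz vr = Posz E - Posz V + 1 + 1 -> (ce + 2 = cv + 2 * k)%N.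
Proof. lia. Qed.

Lemma M_count (G : graph) (rs : real_structure G) :
  M_graph rs ->
  (#|~: ER rs| + 2 = #|~: VR rs| + 2 * #|GR_components rs|)%N.
Proof.
move=> HM; have HM' := HM; case: HM' => _ [Hiso Hs].
move: Hs; rewrite /s_inv /genus Hiso.
have -> : \sum_(C in GR_components rs) (comp_genus rs C + 1) =
  Posz (\sum_(C in GR_components rs)
     (#|[set e | nonisolated_real rs e & psi e \subset C]| + 2)%N)
  - Posz (\sum_(C in GR_components rs) #|C|)%N.
  rewrite !Posz_sum -sumrB; apply: eq_bigr => C _; rewrite /comp_genus; lia.
rewrite big_split /= sum_comps_E // sum_comps_V sum_nat_const.
have -> : ER rs = [set e | nonisolated_real rs e].
  by apply/setP => e; rewrite inE ER_nonisol.
have HE := cardsC [set e | nonisolated_real rs e]; have HV := cardsC (VR rs).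
move: HE HV; rewrite !cardT => HE HV.
rewrite add0r; exact: M_arith HE HV.
Qed.

Lemma two_of (T : finType) (S : {set T}) y z u :
  (#|S| <= 2)%N -> y \in S -> z \in S -> y != z -> u \in S -> (u == y) || (u == z).
Proof.
move=> Hc Hy Hz Hyz Hu; apply/negPn/negP; rewrite negb_or => /andP[Huy Huz].
have Hs : [set y; z; u] \subset S.
  by apply/subsetP=> a; rewrite !inE => /orP[/orP[]|]/eqP->.
have := leq_trans (subset_leq_card Hs) Hc.
rewrite -setUA; rewrite cardsU1 cardsU1 cards1 !inE.
by rewrite (negbTE Hyz) (eq_sym y u) (negbTE Huy) (eq_sym z u) Huz.
Qed.

Lemma bfs_tree (V E : finType) (ps : E -> {set V}) (P : pred E)
  (cls : V -> {set V}) (R0 : {set V}) :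
  (forall e, #|ps e| <= 2)%N -> (forall v, v \in cls v) ->
  (forall u v, u \in cls v -> cls u = cls v) ->
  (forall u v, u \in cls v -> v \in R0 -> u \in R0) ->
  (forall v, exists n, v \in bfs ps P cls R0 n) ->
  exists d : V -> nat, (forall u v, u \in cls v -> d u = d v) /\
    (forall v, v \notin R0 -> exists y e, [/\ y \in cls v, P e, y \in ps e &
        forall u, u \in ps e -> u != y -> (d u < d y)%N]).
Proof.
move=> H2 Hr Hc H0 Hall; have [d [Hd1 Hd2]] := bfs_dist Hall.
have Hdc : forall u v, u \in cls v -> d u = d v.
  move=> u v Huv; apply/eqP; rewrite eqn_leq; apply/andP; split; apply: Hd2.
    exact: bfs_cls Hc H0 Huv (Hd1 v).
  have Hvu : v \in cls u by rewrite (Hc _ _ Huv).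
  exact: bfs_cls Hc H0 Hvu (Hd1 u).
exists d; split => // v Hv.
case Edv: (d v) => [|n].
  by have := Hd1 v; rewrite Edv /= => H; rewrite H in Hv.
have Hvn : v \notin bfs ps P cls R0 n.
  by apply/negP => /Hd2; rewrite Edv ltnn.
have := Hd1 v; rewrite Edv => Hvn1.
have [y [e [z [Hy Pe Hye Hze HzR]]]] := bfs_parent Hvn1 Hvn.
have Hdz : (d z < d y)%N by rewrite (Hdc _ _ Hy) Edv ltnS; apply: Hd2.
exists y, e; split => // u Hu Huy.
have Hyz : y != z by apply/negP => /eqP Eyz; rewrite Eyz ltnn in Hdz.
case/orP: (two_of (H2 e) Hye Hze Hyz Hu) => /eqP Eu; last by rewrite Eu.
by rewrite Eu eqxx in Huy.
Qed.

Lemma inj_count2 (I E : finType) (A : {set I}) (T : {set E}) (Q : I -> E -> bool) :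
  (forall i, i \in A -> exists e, Q i e) ->
  (forall i e, i \in A -> Q i e -> e \in T) ->
  (forall i j e, i \in A -> j \in A -> Q i e -> Q j e -> i = j) ->
  (#|A| <= #|T|)%N.
Proof.
move=> Hex HT Hinj; case: (pickP (mem A)) => [i0 Hi0|H0]; last first.
  by rewrite (eq_card0 H0).
have [e0 _] := Hex i0 Hi0.
pose f i := odflt e0 [pick e | Q i e].
have Hf : forall i, i \in A -> Q i (f i).
  move=> i Hi; rewrite /f; case: pickP => [e He //|H].
  by have [e He] := Hex i Hi; rewrite H in He.
rewrite -(card_in_imset (f := f)); last first.
  by move=> i j Hi Hj Heq; apply: (Hinj i j (f i) Hi Hj (Hf i Hi)); rewrite Heq Hf.
apply: subset_leq_card; apply/subsetP => e /imsetP[i Hi ->]; exact: HT (Hf i Hi).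
Qed.

Definition good (V E : finType) (ps : E -> {set V}) (d : V -> nat) (e : E) (t : V) :=
  (t \in ps e) && [forall u in ps e, (u != t) ==> (d u < d t)%N].

Lemma good_core (V E : finType) (ps : E -> {set V}) (d : V -> nat) e t1 t2 :
  good ps d e t1 -> good ps d e t2 -> t1 = t2.
Proof.
case/andP=> H1 /forall_inP F1 /andP[H2 /forall_inP F2]; apply/eqP; apply/negPn/negP => Hne.
have a := F1 _ H2; have b := F2 _ H1; rewrite eq_sym Hne /= in a; rewrite Hne /= in b.
by have := ltn_trans a b; rewrite ltnn.
Qed.

Lemma goodP (V E : finType) (ps : E -> {set V}) (d : V -> nat) e t :
  t \in ps e -> (forall u, u \in ps e -> u != t -> (d u < d t)%N) -> good ps d e t.
Proof. move=> H1 H2; rewrite /good H1 /=; apply/forall_inP => u Hu; apply/implyP; exact: H2. Qed.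

Lemma connect_closedP (T : finType) (r : rel T) (Q : T -> Prop) x y :
  (forall a b, r a b -> Q a -> Q b) -> connect r x y -> Q x -> Q y.
Proof.
move=> H /connectP[p Hp ->{y}]; elim: p x Hp => [|a p IH] x //= /andP[Hxa Hp] Qx.
exact: (IH a Hp (H _ _ Hxa Qx)).
Qed.

Lemma good_conj (G : graph) (rs : real_structure G) (d : gV G -> nat) e t :
  (forall u, d (conjV rs u) = d u) ->
  good (@psi G) d e t -> good (@psi G) d (conjE rs e) (conjV rs t).
Proof.
move=> Hd /andP[Ht /forall_inP F]; apply: goodP; first exact: mem_psi_conj.
move=> u Hu Hne; have Hu' := mem_psi_conj' Hu.
have Hne' : conjV rs u != t.
  by apply: contraNneq Hne => <-; rewrite conjV_inv.
have := F _ Hu'; rewrite Hne' /= Hd; by rewrite Hd.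
Qed.

Lemma arith2 (a b : nat) : (b + 2 = a + 2 * 0)%N -> (a.-1 <= b)%N -> (0 < a)%N -> False.
Proof. lia. Qed.

Lemma VR_nonempty (G : graph) (rs : real_structure G) :
  M_graph rs -> forall w : gV G, exists r, r \in VR rs.
Proof.
move=> HM w; case: (pickP (mem (VR rs))) => [r Hr | H0]; first by exists r.
exfalso.
have ER0 : forall e, e \notin ER rs.
  move=> e; apply/negP => He; have [y Hy] : exists y, y \in psi e.
    by apply/card_gt0P; case/andP: (psi_card e).
  by have := H0 y; rewrite /= (ER_VR HM He Hy).
pose cls := fun v : gV G => [set v].
have Hc1 : forall v, v \in cls v by move=> v; rewrite set11.
have Hc2 : forall u v, u \in cls v -> cls u = cls v by move=> u v /set1P->.
have Hc3 : forall u v, u \in cls v -> v \in [set w] -> u \in [set w] by move=> u v /set1P->.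
have Hall : forall v, exists n, v \in bfs (@psi G) predT cls [set w] n.
  move=> v; apply: (@connect_closedP _ (@adj G) (fun v => exists n, v \in bfs (@psi G) predT cls [set w] n) w v _ (proj1 HM w v)); last first.
    by exists 0%N; rewrite /bfs /= set11.
  move=> a b /existsP[e /andP[Ha Hb]] [n Hn]; exists n.+1.
  exact: (bfs_edge Hc1 (isT : predT e) Hb Ha Hn).
have [d [Hd Hpar]] := bfs_tree (@psi_le2 G) Hc1 Hc2 Hc3 Hall.
have Hcnt : (#|~: [set w]| <= #|[set: gE G]|)%N.
  apply: (inj_count2 (Q := fun v e => good (@psi G) d e v)).
  - move=> v; rewrite inE => /Hpar[y [e [/set1P-> _ Hy Hg]]]; exists e; exact: goodP.
  - by move=> *; rewrite inE.
  - by move=> i j e _ _; apply: good_core.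
have HMc := M_count HM.
have Hk : GR_components rs = set0.
  apply/setP => C; rewrite inE; apply/negP => /comps_mem[x Hx _].
  by have := H0 x; rewrite /= Hx.
have HE : ~: ER rs = setT by apply/setP => e; rewrite in_setC in_setT ER0.
have HV : ~: VR rs = setT by apply/setP => v; rewrite in_setC in_setT; have := H0 v; rewrite /= => ->.
rewrite Hk HE HV cards0 cardsC1 in HMc Hcnt.
have : (0 < #|[set: gV G]|)%N by apply/card_gt0P; exists w.
rewrite !cardsT in HMc Hcnt *; exact: arith2 HMc Hcnt.
Qed.

Definition Pnr (G : graph) (rs : real_structure G) (e0 : gE G) (e : gE G) : bool :=
  [&& e \notin ER rs, e != e0 & e != conjE rs e0].

Lemma Pnr_conj (G : graph) (rs : real_structure G) e0 e :
  Pnr rs e0 e -> Pnr rs e0 (conjE rs e).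
Proof.
case/and3P => H1 H2 H3; rewrite /Pnr ER_conj H1 /=; apply/andP; split.
  by apply: contraNneq H3 => <-; rewrite conjE_inv.
by apply: contraNneq H2 => /(can_inj (conjE_inv rs))->.
Qed.

Definition adjc (G : graph) (rs : real_structure G) (e0 : gE G) : rel (gV G) :=
  fun a b => [exists e, [&& e != e0, e != conjE rs e0, a \in psi e & b \in psi e]].

Lemma adjc_conj (G : graph) (rs : real_structure G) e0 a b :
  adjc rs e0 a b -> adjc rs e0 (conjV rs a) (conjV rs b).
Proof.
case/existsP => e /and4P[H1 H2 Ha Hb]; apply/existsP; exists (conjE rs e).
rewrite !mem_psi_conj // andbT; apply/andP; split.
  by apply: contraNneq H2 => <-; rewrite conjE_inv.
rewrite andbT; by apply: contraNneq H1 => /(can_inj (conjE_inv rs))->.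
Qed.

Lemma connc_conj (G : graph) (rs : real_structure G) e0 a b :
  connect (adjc rs e0) a b -> connect (adjc rs e0) (conjV rs a) (conjV rs b).
Proof.
move=> H; apply: (@connect_closedP _ (adjc rs e0)
   (fun v => connect (adjc rs e0) (conjV rs a) (conjV rs v)) a b _ H (connect0 _ _)).
move=> u v Huv Hu; apply: connect_trans Hu _; apply: connect1; exact: adjc_conj.
Qed.

Lemma cut_reach (G : graph) (rs : real_structure G) (e0 : gE G) (w x : gV G) :
  M_graph rs -> w \notin VR rs -> w \in psi e0 -> x \in psi e0 -> w != x ->
  (connect (adjc rs e0) w x || connect (adjc rs e0) (conjV rs w) x) ->
  forall v, exists n, v \in bfs (@psi G) (Pnr rs e0) (clsq rs) (clsq rs w) n.
Proof.
move=> HM Hw Hw0 Hx0 Hwx Hx.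
pose Reach v := exists n, v \in bfs (@psi G) (Pnr rs e0) (clsq rs) (clsq rs w) n.
have Hc3 : forall u v, u \in clsq rs v -> v \in clsq rs w -> u \in clsq rs w.
  by move=> u v Hu Hv; rewrite -(clsq_eq Hv).
have Rcls : forall u v, u \in clsq rs v -> Reach v -> Reach u.
  move=> u v Hu [n Hn]; exists n; exact: bfs_cls (@clsq_eq G rs) Hc3 Hu Hn.
have Redge : forall e a b, e != e0 -> e != conjE rs e0 -> a \in psi e -> b \in psi e ->
    Reach a -> Reach b.
  move=> e a b H1 H2 Ha Hb Ra; case He: (e \in ER rs).
    exact: Rcls (clsq_edge HM He Ha Hb) Ra.
  case: Ra => n Hn; exists n.+1.
  apply: (bfs_edge (@clsq_refl G rs) _ Hb Ha Hn); by rewrite /Pnr He H1 H2.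
have Radjc : forall a b, adjc rs e0 a b -> Reach a -> Reach b.
  by move=> a b /existsP[e /and4P[H1 H2 Ha Hb]]; apply: Redge H1 H2 Ha Hb.
have Rw : Reach w by exists 0%N; exact: clsq_refl.
have Rsw : Reach (conjV rs w) by exists 0%N; exact: clsq_conj.
have Rconj : forall v, Reach v -> Reach (conjV rs v) by move=> v; apply: Rcls; exact: clsq_conj.
have Rx : Reach x.
  case/orP: Hx => H.
    exact: (@connect_closedP _ (adjc rs e0) Reach w x Radjc H Rw).
  exact: (@connect_closedP _ (adjc rs e0) Reach _ x Radjc H Rsw).
have Radj : forall a b, adj a b -> Reach a -> Reach b.
  move=> a b /existsP[e /andP[Ha Hb]] Ra.
  case: (eqVneq e e0) => [Ee|H1].
    rewrite Ee in Hb; case/orP: (two_of (psi_le2 e0) Hw0 Hx0 Hwx Hb) => /eqP->//.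
  case: (eqVneq e (conjE rs e0)) => [Ee|H2]; last exact: Redge H1 H2 Ha Hb Ra.
  rewrite Ee in Hb; have Hb' := mem_psi_conj' Hb.
  have Rb' : Reach (conjV rs b).
    by case/orP: (two_of (psi_le2 e0) Hw0 Hx0 Hwx Hb') => /eqP->.
  by have := Rconj _ Rb'; rewrite conjV_inv.
move=> v; exact: (@connect_closedP _ (@adj G) Reach w v Radj (proj1 HM w v) Rw).
Qed.

Lemma rank_arith (a b : nat) : a != b -> ~~ (a < b)%N = (b < a)%N.
Proof. move=> H; rewrite -leqNgt leq_eqVlt eq_sym (negbTE H). by []. Qed.

Lemma cut_arith (nv ne k a t : nat) :
  (ne + 2 = nv + 2 * k)%N -> (a = (nv - 2) + k * 2)%N -> (t = ne - 2)%N ->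
  (2 <= nv)%N -> (2 <= ne)%N -> (a <= t)%N -> False.
Proof. lia. Qed.

Lemma cut_count (G : graph) (rs : real_structure G) (e0 : gE G) (w x : gV G) :
  M_graph rs -> w \notin VR rs -> w \in psi e0 -> x \in psi e0 -> w != x ->
  (forall v, exists n, v \in bfs (@psi G) (Pnr rs e0) (clsq rs) (clsq rs w) n) -> False.
Proof.
move=> HM Hw Hw0 Hx0 Hwx Hall.
have Hc3 : forall u v, u \in clsq rs v -> v \in clsq rs w -> u \in clsq rs w.
  by move=> u v Hu Hv; rewrite -(clsq_eq Hv).
have [d [Hd Hpar]] := bfs_tree (@psi_le2 G) (@clsq_refl G rs) (@clsq_eq G rs) Hc3 Hall.
have Hds : forall u, d (conjV rs u) = d u by move=> u; apply: Hd; exact: clsq_conj.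
have He0 : e0 \notin ER rs := nonreal_edge HM Hw Hw0.
have Hcw : clsq rs w = [set w; conjV rs w] by rewrite /clsq (negbTE Hw).
pose Vi := [set v | (v \notin VR rs) && (v \notin clsq rs w)].
pose X := setX (GR_components rs) [set: bool].
pose A := (@inl _ ({set gV G} * bool)%type) @: Vi :|: (@inr (gV G) _) @: X.
pose T := [set e | Pnr rs e0 e].
pose Q := fun (i : (gV G + ({set gV G} * bool))%type) e =>
  Pnr rs e0 e && match i with
    | inl v => good (@psi G) d e v
    | inr p => [exists y in p.1, good (@psi G) d e y] &&
               (p.2 == (enum_rank e < enum_rank (conjE rs e))%N)
    end.
have HA : (#|A| <= #|T|)%N.
  apply: (inj_count2 (Q := Q)).
  - move=> i /setUP[/imsetP[v Hv ->] | /imsetP[[C b] Hp ->]].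
      move: Hv; rewrite inE => /andP[HvR HvW].
      have [y [e [Hy Pe Hye Hg]]] := Hpar v HvW.
      move: Hy; rewrite /clsq (negbTE HvR) in_set2 => /orP[/eqP Eyv|/eqP Eyv].
        by exists e; rewrite /Q Pe /=; apply: goodP; rewrite -Eyv.
      exists (conjE rs e); rewrite /Q Pnr_conj //=.
      have := good_conj Hds (goodP Hye Hg); by rewrite Eyv conjV_inv.
    move: Hp; rewrite in_setX /= => /andP[/comps_mem[x0 Hx0R EC] _].
    have Hx0w : x0 \notin clsq rs w.
      by apply/negP => /clsq_VR; rewrite Hx0R (negbTE Hw).
    have [y [e [Hy Pe Hye Hg]]] := Hpar x0 Hx0w.
    have HyR : y \in VR rs by rewrite (clsq_VR Hy).
    have Hsy : conjV rs y = y by apply/eqP; move: HyR; rewrite inE.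
    have HyC : y \in C by rewrite EC.
    have Hne : conjE rs e != e by apply: conjE_neq; case/and3P: Pe.
    case: (eqVneq b (enum_rank e < enum_rank (conjE rs e))%N) => Hb.
      exists e; rewrite /Q Pe /= Hb eqxx andbT; apply/existsP; exists y.
      by rewrite HyC; apply: goodP.
    exists (conjE rs e); rewrite /Q Pnr_conj //= conjE_inv; apply/andP; split.
      apply/existsP; exists y; rewrite HyC /=.
      by have := good_conj Hds (goodP Hye Hg); rewrite Hsy.
    have Hr : (nat_of_ord (enum_rank e)) != enum_rank (conjE rs e).
      by apply: contraNneq Hne => /val_inj/enum_rank_inj<-.
    rewrite -(rank_arith Hr); move: Hb; by case: b; case: (_ < _)%N.
  - by move=> i e _ /andP[H _]; rewrite inE.
  - have HiV : forall i, i \in A -> forall e, Q i e ->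
        exists t, [/\ good (@psi G) d e t,
          (forall v, i = inl v -> t = v /\ t \notin VR rs) &
          (forall C b, i = inr (C, b) -> [/\ t \in C, t \in VR rs, C = clsq rs t &
               b = (enum_rank e < enum_rank (conjE rs e))%N])].
      move=> i /setUP[/imsetP[v Hv ->] | /imsetP[[C b] Hp ->]] e /andP[_ Hq].
        exists v; split => //; first by move=> v' [<-]; move: Hv; rewrite inE => /andP[].
      case/andP: Hq => /existsP[y /andP[HyC Hg]] /eqP Hb.
      move: Hp; rewrite in_setX /= => /andP[/comps_mem[x0 Hx0R EC] _].
      exists y; split => // C' b' [<- <-]; split => //.
      + by rewrite EC in HyC; rewrite (clsq_VR HyC).
      + by rewrite EC in HyC *; rewrite (clsq_eq HyC).
    move=> i j e Hi Hj Qi Qj.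
    have [t1 [G1 L1 R1]] := HiV i Hi e Qi; have [t2 [G2 L2 R2]] := HiV j Hj e Qj.
    have Et := good_core G1 G2; subst t2.
    case: i Hi Qi L1 R1 => [v|[C b]] Hi Qi L1 R1; case: j Hj Qj L2 R2 => [v'|[C' b']] Hj Qj L2 R2.
    + by case: (L1 v erefl) => <- _; case: (L2 v' erefl) => <-.
    + by case: (L1 v erefl) => _ H; case: (R2 C' b' erefl) => _ H' _ _; rewrite H' in H.
    + by case: (L2 v' erefl) => _ H; case: (R1 C b erefl) => _ H' _ _; rewrite H' in H.
    + by case: (R1 C b erefl) => _ _ -> ->; case: (R2 C' b' erefl) => _ _ -> ->.
have Hsub : clsq rs w \subset ~: VR rs.
  apply/subsetP => u Hu; rewrite inE; by rewrite (clsq_VR Hu).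
have Hsub2 : [set e0; conjE rs e0] \subset ~: ER rs.
  by apply/subsetP => e; rewrite in_set2 inE => /orP[]/eqP->; rewrite ?ER_conj.
have Hcw2 : #|clsq rs w| = 2%N by rewrite Hcw cards2 eq_sym conjV_neq.
have He2 : #|[set e0; conjE rs e0]| = 2%N by rewrite cards2 eq_sym conjE_neq.
have HVi : Vi = ~: VR rs :\: clsq rs w by apply/setP => v; rewrite !inE andbC.
have HT : T = ~: ER rs :\: [set e0; conjE rs e0].
  apply/setP => e; rewrite !inE /Pnr !inE negb_or.
  by case: (e == e0); case: (e == conjE rs e0); case: (conjE rs e == e).
have cA : #|A| = (#|Vi| + #|X|)%N.
  rewrite cardsU !card_imset; last by move=> a b [].
    have -> : #|[set inl x | x in Vi] :&: [set inr x | x in X]| = 0%N.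
      apply/eqP; rewrite cards_eq0; apply/eqP/setP => i; rewrite !inE.
      apply/negP => /andP[/imsetP[v _ ->] /imsetP[p _]] //.
    by rewrite subn0.
  by move=> a b [].
rewrite cA HT HVi !cardsD (setIidPr Hsub) (setIidPr Hsub2) Hcw2 He2 /X cardsX cardsT card_bool in HA.
apply: (cut_arith (M_count HM) erefl erefl _ _ HA).
  by rewrite -Hcw2; apply: subset_leq_card.
by rewrite -He2; apply: subset_leq_card.
Qed.

Lemma bfs_tree2 (V E : finType) (ps : E -> {set V}) (P : pred E)
  (cls : V -> {set V}) (R0 : {set V}) :
  (forall e, #|ps e| <= 2)%N -> (forall v, v \in cls v) ->
  (forall u v, u \in cls v -> cls u = cls v) ->
  (forall u v, u \in cls v -> v \in R0 -> u \in R0) ->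
  (forall v, exists n, v \in bfs ps P cls R0 n) ->
  exists d : V -> nat, [/\ (forall v, v \in bfs ps P cls R0 (d v)),
    (forall v n, v \in bfs ps P cls R0 n -> (d v <= n)%N) &
    (forall v, v \notin R0 -> exists y e z, [/\ y \in cls v, P e, y \in ps e,
        z \in ps e & (d z < d y)%N])].
Proof.
move=> H2 Hr Hc H0 Hall; have [d [Hd1 Hd2]] := bfs_dist Hall.
have Hdc : forall u v, u \in cls v -> d u = d v.
  move=> u v Huv; apply/eqP; rewrite eqn_leq; apply/andP; split; apply: Hd2.
    exact: bfs_cls Hc H0 Huv (Hd1 v).
  have Hvu : v \in cls u by rewrite (Hc _ _ Huv).
  exact: bfs_cls Hc H0 Hvu (Hd1 u).
exists d; split => // v Hv.
case Edv: (d v) => [|n].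
  by have := Hd1 v; rewrite Edv /= => H; rewrite H in Hv.
have Hvn : v \notin bfs ps P cls R0 n.
  by apply/negP => /Hd2; rewrite Edv ltnn.
have := Hd1 v; rewrite Edv => Hvn1.
have [y [e [z [Hy Pe Hye Hze HzR]]]] := bfs_parent Hvn1 Hvn.
have Hdz : (d z < d y)%N by rewrite (Hdc _ _ Hy) Edv ltnS; apply: Hd2.
by exists y, e, z.
Qed.

Lemma dist_VR (G : graph) (rs : real_structure G) :
  M_graph rs -> (exists r, r \in VR rs) ->
  exists d : gV G -> nat, (forall v, d (conjV rs v) = d v) /\
    (forall w, w \notin VR rs -> exists e x, [/\ w \in psi e, x \in psi e & (d x < d w)%N]).
Proof.
move=> HM [r Hr].
pose cls := fun v : gV G => [set v].
have Hc1 : forall v, v \in cls v by move=> v; rewrite set11.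
have Hc2 : forall u v, u \in cls v -> cls u = cls v by move=> u v /set1P->.
have Hc3 : forall u v, u \in cls v -> v \in VR rs -> u \in VR rs by move=> u v /set1P->.
pose R := bfs (@psi G) predT cls (VR rs).
have Hall : forall v, exists n, v \in R n.
  move=> v; apply: (@connect_closedP _ (@adj G) (fun v => exists n, v \in R n) r v _ (proj1 HM r v)); last first.
    by exists 0%N.
  move=> a b /existsP[e /andP[Ha Hb]] [n Hn]; exists n.+1.
  exact: (bfs_edge Hc1 (isT : predT e) Hb Ha Hn).
have Rconj : forall n v, v \in R n -> conjV rs v \in R n.
  elim=> [|n IH] v Hv; first by rewrite /R /bfs /= VR_conj.
  case Hvn: (v \in R n).
    by apply: (subsetP (bfs_mono _ _ _ _ (leqnSn n))); apply: IH.
  have [y [e [z [/set1P Ey _ Hye Hze HzR]]]] := bfs_parent Hv (negbT Hvn).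
  subst y; apply: (bfs_edge Hc1 (isT : predT (conjE rs e)) (mem_psi_conj rs Hye) (mem_psi_conj rs Hze)).
  exact: IH.
have [d [Hd1 Hd2 Hpar]] := bfs_tree2 (@psi_le2 G) Hc1 Hc2 Hc3 Hall.
exists d; split.
  move=> v; apply/eqP; rewrite eqn_leq; apply/andP; split; apply: Hd2.
    exact: Rconj (Hd1 v).
  by rewrite -{1}(conjV_inv rs v); apply: Rconj (Hd1 _).
move=> w Hw; have [y [e [z [/set1P Ey _ Hye Hze Hd]]]] := Hpar w Hw.
by subst y; exists e, z.
Qed.

Lemma cut (G : graph) (rs : real_structure G) (e0 : gE G) (w x : gV G) :
  M_graph rs -> w \notin VR rs -> w \in psi e0 -> x \in psi e0 -> w != x ->
  exists S : {set gV G}, [/\ w \in S, x \notin S,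
    (forall v, (conjV rs v \in S) = (v \in S)) &
    (forall e y z, e != e0 -> e != conjE rs e0 -> y \in psi e -> z \in psi e ->
       y \in S -> z \in S)].
Proof.
move=> HM Hw Hw0 Hx0 Hwx.
pose S := [set v | connect (adjc rs e0) w v || connect (adjc rs e0) (conjV rs w) v].
have HS1 : forall v, conjV rs v \in S -> v \in S.
  move=> v; rewrite !inE => /orP[] /connc_conj; rewrite !conjV_inv => ->//.
  by rewrite orbT.
exists S; split.
- by rewrite inE connect0.
- apply/negP => HxS; apply: (cut_count HM Hw Hw0 Hx0 Hwx).
  by apply: (cut_reach HM Hw Hw0 Hx0 Hwx); move: HxS; rewrite inE.
- move=> v; apply/idP/idP; first exact: HS1.
  by move=> H; apply: HS1; rewrite conjV_inv.
- move=> e y z H1 H2 Hy Hz; rewrite !inE => /orP[] H.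
    by rewrite (connect_trans H (connect1 _)) //; apply/existsP; exists e; rewrite H1 H2 Hy Hz.
  by rewrite (connect_trans H (connect1 _)) ?orbT //; apply/existsP; exists e; rewrite H1 H2 Hy Hz.
Qed.

Lemma edge_contrib (V : finType) (S A : {set V}) a b v :
  A = [set a; b] -> a \in S -> b \notin S ->
  (if v \in A then \sum_(u in A :\ v) (Posz (u \in S) - Posz (v \in S)) else 0) =
  Posz (v == b) - Posz (v == a).
Proof.
move=> -> Ha Hb.
have Hab : a != b by apply: contraNneq Hb => <-.
case: (eqVneq v a) => [->|Hva].
  rewrite in_set2 eqxx /= (negbTE Hab).
  have -> : [set a; b] :\ a = [set b].
    apply/setP => u; rewrite !inE; have [->|H1] := eqVneq u a; first by rewrite (negbTE Hab).
    by [].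
  by rewrite big_set1 Ha (negbTE Hb).
case: (eqVneq v b) => [->|Hvb].
  rewrite in_set2 eqxx orbT.
  have -> : [set a; b] :\ b = [set a].
    apply/setP => u; rewrite !inE; have [->|H1] := eqVneq u b; first by rewrite eq_sym (negbTE Hab).
    by rewrite orbF.
  by rewrite big_set1 Ha (negbTE Hb).
by rewrite in_set2 (negbTE Hva) (negbTE Hvb).
Qed.

Lemma set2_psi (G : graph) (e : gE G) a b :
  a \in psi e -> b \in psi e -> a != b -> psi e = [set a; b].
Proof.
move=> Ha Hb Hab; apply/setP => u; rewrite in_set2; apply/idP/idP.
  by move=> Hu; apply: two_of (psi_le2 e) Ha Hb Hab Hu.
by case/orP => /eqP->.
Qed.

Lemma lap_cut (G : graph) (rs : real_structure G) (S : {set gV G}) e0 w x v :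
  w \in psi e0 -> x \in psi e0 -> w != x -> w \in S -> x \notin S ->
  (forall v, (conjV rs v \in S) = (v \in S)) ->
  (forall e y z, e != e0 -> e != conjE rs e0 -> y \in psi e -> z \in psi e ->
       y \in S -> z \in S) ->
  conjE rs e0 != e0 ->
  laplacian (fun u => Posz (u \in S)) v =
  (Posz (v == x) - Posz (v == w)) + (Posz (v == conjV rs x) - Posz (v == conjV rs w)).
Proof.
move=> Hw Hx Hwx HwS HxS HSc HSe Hne.
rewrite /laplacian big_mkcond (bigD1 e0) //= (bigD1 (conjE rs e0)) //=.
rewrite [X in _ + (_ + X) = _]big1 ?addr0; last first.
  move=> e /andP[H2 H1]; case: ifP => // Hve; apply: big1 => u.
  rewrite !inE => /andP[_ Hu].
  have -> : (u \in S) = (v \in S).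
    by apply/idP/idP; [apply: HSe H2 H1 Hu Hve | apply: HSe H2 H1 Hve Hu].
  by rewrite subrr.
rewrite (edge_contrib v (set2_psi Hw Hx Hwx) HwS HxS).
have Hsw : conjV rs w \in S by rewrite HSc.
have Hsx : conjV rs x \notin S by rewrite HSc.
have Hswx : conjV rs w != conjV rs x.
  by apply: contra_neq Hwx => /(can_inj (conjV_inv rs)).
by rewrite (edge_contrib v (set2_psi (mem_psi_conj rs Hw) (mem_psi_conj rs Hx) Hswx) Hsw Hsx).
Qed.

Lemma lap_add (G : graph) (f g : gV G -> int) v :
  laplacian (fun u => f u + g u) v = laplacian f v + laplacian g v.
Proof.
rewrite /laplacian -big_split; apply: eq_bigr => e _; rewrite -big_split.
by apply: eq_bigr => u _ /=; rewrite opprD addrACA.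
Qed.

Lemma lap0 (G : graph) v : laplacian (fun _ : gV G => 0) v = 0.
Proof. by rewrite /laplacian big1 // => e _; rewrite big1 // => u _; rewrite subrr. Qed.

Lemma lin_equiv_refl (G : graph) (D : divisor G) : lin_equiv D D.
Proof. by exists (fun _ => 0) => v; rewrite subrr lap0. Qed.

Lemma lin_equiv_trans (G : graph) (D1 D2 D3 : divisor G) :
  lin_equiv D1 D2 -> lin_equiv D2 D3 -> lin_equiv D1 D3.
Proof.
move=> [f Hf] [g Hg]; exists (fun u => f u + g u) => v.
by rewrite lap_add -Hf -Hg; lia.
Qed.

Lemma conj_eq (G : graph) (rs : real_structure G) v a :
  (conjV rs v == a) = (v == conjV rs a).
Proof.
apply/eqP/eqP => [<-|->]; by rewrite conjV_inv.
Qed.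

Lemma sum_ind (V : finType) (a : V) (F : V -> int) :
  \sum_v Posz (v == a) * F v = F a.
Proof.
rewrite (bigD1 a) //= eqxx mul1r big1 ?addr0 // => v /negbTE->; by rewrite mul0r.
Qed.

Definition mu (G : graph) (d : gV G -> nat) (D : divisor G) : int :=
  \sum_v D v * Posz (d v).

Lemma mu_ge0 (G : graph) d (D : divisor G) : effective D -> 0 <= mu d D.
Proof. by move=> HD; apply: sumr_ge0 => v _; apply: mulr_ge0. Qed.

Lemma ar1 (a b c : int) : 0 <= b -> 0 <= c -> 0 < a -> 0 <= a + ((b - Posz true) + (c - Posz false)).
Proof. lia. Qed.
Lemma ar2 (a b c : int) : 0 <= b -> 0 <= c -> 0 < a -> 0 <= a + ((b - Posz false) + (c - Posz true)).
Proof. lia. Qed.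
Lemma ar3 (a b c : int) : 0 <= b -> 0 <= c -> 0 <= a -> 0 <= a + ((b - Posz false) + (c - Posz false)).
Proof. lia. Qed.
Lemma ar4 (a b c : int) : a + (b + c) = a + (c + b).
Proof. by rewrite (addrC b). Qed.

Lemma step (G : graph) (rs : real_structure G) (d : gV G -> nat) (D : divisor G) w :
  M_graph rs -> (forall v, d (conjV rs v) = d v) ->
  (forall w, w \notin VR rs -> exists e x, [/\ w \in psi e, x \in psi e & (d x < d w)%N]) ->
  effective D -> real_div rs D -> w \notin VR rs -> D w != 0 ->
  exists D1, [/\ effective D1, real_div rs D1, lin_equiv D D1 & mu d D1 < mu d D].
Proof.
move=> HM Hds Hpar HD HR Hw HDw.
have [e0 [x [Hw0 Hx0 Hdx]]] := Hpar w Hw.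
have Hwx : w != x by apply: contraTneq Hdx => ->; rewrite ltnn.
have [S [HwS HxS HSc HSe]] := cut HM Hw Hw0 Hx0 Hwx.
have He0 : conjE rs e0 != e0 by apply: conjE_neq; exact: nonreal_edge HM Hw Hw0.
pose f := fun u : gV G => Posz (u \in S).
have HL := fun v => lap_cut v Hw0 Hx0 Hwx HwS HxS HSc HSe He0.
pose D1 : divisor G := [ffun v => D v + laplacian f v].
have HD1 : forall v, D1 v = D v + ((Posz (v == x) - Posz (v == w)) +
     (Posz (v == conjV rs x) - Posz (v == conjV rs w))).
  by move=> v; rewrite /D1 ffunE HL.
have Hsw : conjV rs w != w by apply: conjV_neq.
have HDw1 : 0 < D w by rewrite lt0r HDw HD.
exists D1; split.
- move=> v; rewrite HD1.
  have Hb : forall b : bool, 0 <= Posz b by case.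
  have Hws : (w == conjV rs w) = false by rewrite eq_sym (negbTE Hsw).
  case: (eqVneq v w) => [->|Hvw].
    rewrite ?eqxx Hws; exact: ar1 (Hb _) (Hb _) HDw1.
  case: (eqVneq v (conjV rs w)) => [->|Hvsw].
    rewrite ?eqxx ?(negbTE Hsw) (HR w); exact: ar2 (Hb _) (Hb _) HDw1.
  exact: ar3 (Hb _) (Hb _) (HD v).
- move=> v; rewrite !HD1 HR !conj_eq !conjV_inv; exact: ar4.
- by exists f => v; rewrite /D1 ffunE addrC addKr.
- rewrite /mu.
  have -> : \sum_v D1 v * Posz (d v) = \sum_v D v * Posz (d v) +
      ((Posz (d x) - Posz (d w)) + (Posz (d (conjV rs x)) - Posz (d (conjV rs w)))).
    under eq_bigr => v _ do rewrite HD1 !mulrDl !mulNr.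
    rewrite !big_split /= !sumrN !sum_ind. by [].
  rewrite !Hds; move: Hdx; lia.
Qed.


Lemma ar5 (m m2 : int) (n : nat) : m < Posz n.+1 -> m2 < m -> m2 < Posz n.
Proof. lia. Qed.

Unset Implicit Arguments.
Set Strict Implicit.

Theorem theorem3 (G : graph) (rs : real_structure G) (D : divisor G) :
  M_graph rs -> effective D -> real_div rs D ->
  exists D' : divisor G, effective D' /\ totally_real rs D' /\ lin_equiv D D'.
Proof.
move=> HM HD HR.
case: (pickP (@predT (gV G))) => [w0 _|H0]; last first.
  exists D; split => //; split; last exact: lin_equiv_refl.
  by split => // v; have := H0 v.
have [d [Hds Hpar]] := dist_VR HM (VR_nonempty HM w0).
suff : forall n : nat, forall D : divisor G, effective D -> real_div rs D ->
    mu d D < Posz n ->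
    exists D' : divisor G, effective D' /\ totally_real rs D' /\ lin_equiv D D'.
  move=> H; apply: (H (absz (mu d D)).+1 D HD HR).
  by rewrite -addn1 PoszD gez0_abs ?mu_ge0 // ltrDl.
elim=> [|n IH] D1 HD1 HR1 Hmu.
  by have := mu_ge0 d HD1; rewrite leNgt Hmu.
case: (boolP [exists v, (D1 v != 0) && (v \notin VR rs)]) => [/existsP[w /andP[Hw1 Hw2]]|Hn].
  have [D2 [HD2 HR2 HL2 Hmu2]] := step HM Hds Hpar HD1 HR1 Hw2 Hw1.
  have [D' [HD' [HT' HL']]] := IH D2 HD2 HR2 (ar5 Hmu Hmu2).
  by exists D'; split => //; split => //; apply: lin_equiv_trans HL2 HL'.
exists D1; split => //; split; last exact: lin_equiv_refl.
split => // v Hv; apply/negPn/negP => HvR.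
by move/negP: Hn; apply; apply/existsP; exists v; rewrite Hv HvR.
Qed.
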